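(* Let $f:\{0,1\}^n\to\{0,1\}^m$ be a fully balanced function and $r=\dim\operatorname{img}(f)$. Consider the procedure: set $C=B=\varnothing$. While $\langle C\cup B\rangle\neq\{0,1\}^m$: choose $\mathbf{y}\in\{0,1\}^m\setminus\langle C\cup B\rangle$ and query $\mathbf{y}$. If $\mathbf{y}\in C(f)$, add $\mathbf{y}$ to $C$. Otherwise, if $B=\varnothing$, add $\mathbf{y}$ to $B$; if $B\neq\varnothing$, go through the elements $\mathbf{s}\in B$ one at a time, querying $\mathbf{y}_{\mathbf{s}}=\mathbf{s}\oplus\mathbf{y}$: at the first $\mathbf{s}$ with $\mathbf{y}_{\mathbf{s}}\in C(f)$, add $\mathbf{y}_{\mathbf{s}}$ to $C$ and stop going through $B$; if $\mathbf{y}_{\mathbf{s}}\notin C(f)$ for all $\mathbf{s}\in B$, add $\mathbf{y}$ and all the $\mathbf{y}_{\mathbf{s}}$ ($\mathbf{s}\in B$) to $B$. Then the procedure terminates, at termination $\#C=m-r$ (so $r$ is determined with certainty, and $C$ is a basis of $C(f)$) and $\#B=2^r-1$, and the total number of oracle queries is at most $2^r(m-r+1)-1$.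
   Context: Strings in $\{0,1\}^k$ are identified with vectors of $\mathbb{F}_2^k$; $\oplus$ is bitwise addition mod 2; $\mathbf{a}\cdot\mathbf{b}=\bigoplus_i a_ib_i$; $\langle X\rangle$ is the linear span of $X$. $f$ is $\mathbf{y}$-balanced if $f(\mathbf{x})\cdot\mathbf{y}=0$ for exactly half of the $\mathbf{x}$ and $=1$ for the other half, and $\mathbf{y}$-constant if $f(\mathbf{x})\cdot\mathbf{y}$ is the same for all $\mathbf{x}$. $f$ is fully balanced if for every $\mathbf{y}$ it is $\mathbf{y}$-balanced or $\mathbf{y}$-constant; then $\operatorname{img}(f)$ is an affine subspace. $C(f)=\{\mathbf{y}: f\text{ is }\mathbf{y}\text{-constant}\}$. A query on $\mathbf{y}$ reports whether $\mathbf{y}\in C(f)$ (one run of the Generalised Phase Kick-Back algorithm with marker $\mathbf{y}$, whose output is $\mathbf{0}$ exactly when $f$ is $\mathbf{y}$-constant, for fully balanced $f$). *)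

(* Defs.v *)
From HB Require Import structures.
From mathcomp Require Import all_boot all_order all_algebra.
Set Implicit Arguments. Unset Strict Implicit. Unset Printing Implicit Defensive.
Import GRing.Theory.
Local Open Scope ring_scope.

Notation bits k := 'rV['F_2]_k.

Definition dotb (k : nat) (a b : bits k) : 'F_2 := (a *m b^T) 0 0.

Section Defs.
Variables (n m : nat) (f : bits n -> bits m).

Definition ybalanced (y : bits m) : Prop :=
  #|[set x | dotb (f x) y == 0]| = #|[set x | dotb (f x) y == 1]|.

Definition yconstant (y : bits m) : Prop :=
  forall x x', dotb (f x) y = dotb (f x') y.

Definition fully_balanced : Prop :=
  forall y, ybalanced y \/ yconstant y.

(* dim img(f): dimension of the direction space of the affine subspace img f *)
Definition dim_img : nat := \dim <<[seq f x - f 0 | x : bits n]>>%VS.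

(* state of the procedure: (C, B, number of oracle queries so far) *)
Definition state := (seq (bits m) * seq (bits m) * nat)%type.

Definition init_state : state := ([::], [::], 0%N).

(* one iteration of the while loop; nondeterministic in the choice of y and
   in the order in which the elements of B are gone through *)
Definition step (s s' : state) : Prop :=
  let: (C, B, q) := s in
  let: (C', B', q') := s' in
  <<C ++ B>>%VS != fullv /\
  exists y : bits m, y \notin <<C ++ B>>%VS /\
    ( (yconstant y /\ C' = rcons C y /\ B' = B /\ q' = q.+1)
    \/ (~ yconstant y /\ B = [::] /\ C' = C /\ B' = [:: y] /\ q' = q.+1)
    \/ (~ yconstant y /\ B != [::] /\
        exists ord : seq (bits m), perm_eq ord B /\
        ( (exists k : nat, (k < size ord)%N /\
             (forall i, (i < k)%N -> ~ yconstant (nth 0 ord i + y)) /\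
             yconstant (nth 0 ord k + y) /\
             C' = rcons C (nth 0 ord k + y) /\ B' = B /\ q' = (q + 1 + k.+1)%N)
        \/ ((forall i, (i < size ord)%N -> ~ yconstant (nth 0 ord i + y)) /\
             C' = C /\ B' = B ++ y :: [seq s + y | s <- ord] /\
             q' = (q + 1 + size ord)%N)))).

Inductive reachable : state -> Prop :=
| reach_init : reachable init_state
| reach_step s s' : reachable s -> step s s' -> reachable s'.

Definition final (s : state) : Prop := <<s.1.1 ++ s.1.2>>%VS = fullv.

End Defs.

(* Main.v *)
Require Import Defs.
From HB Require Import structures.
From mathcomp Require Import all_boot all_order all_algebra.
From mathcomp Require Import zify.
Import GRing.Theory.
Local Open Scope ring_scope.
Set Implicit Arguments. Unset Strict Implicit. Unset Printing Implicit Defensive.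

Section Lin.
Variable m : nat.
Implicit Types a b y z : bits m.

Lemma dotbC a b : dotb a b = dotb b a.
Proof. rewrite /dotb -[b *m a^T]trmxK trmx_mul trmxK; by rewrite [RHS]mxE. Qed.

Lemma dotbDr a y z : dotb a (y + z) = dotb a y + dotb a z.
Proof. by rewrite /dotb linearD /= mulmxDr mxE. Qed.

Lemma dotbZr a k y : dotb a (k *: y) = k * dotb a y.
Proof. by rewrite /dotb linearZ /= -scalemxAr mxE. Qed.

Lemma dotb0r a : dotb a 0 = 0.
Proof. by rewrite /dotb linear0 mulmx0 mxE. Qed.

Lemma dotbNr a y : dotb a (- y) = - dotb a y.
Proof. by rewrite /dotb linearN /= mulmxN mxE. Qed.

Lemma dotbDl a b y : dotb (a + b) y = dotb a y + dotb b y.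
Proof. by rewrite dotbC dotbDr !(dotbC y). Qed.

Lemma dotbNl a y : dotb (- a) y = - dotb a y.
Proof. by rewrite dotbC dotbNr dotbC. Qed.

Lemma dotb_span_r a (X : seq (bits m)) v :
  (forall x, x \in X -> dotb a x = 0) -> v \in <<X>>%VS -> dotb a v = 0.
Proof.
move=> H Hv; rewrite (coord_span (X:=in_tuple X) Hv).
rewrite /dotb linear_sum /= mulmx_sumr summxE big1 // => i _.
rewrite linearZ /= -scalemxAr mxE.
have := H (X`_i); rewrite /dotb => ->; first by rewrite mulr0.
by apply: mem_nth.
Qed.

Lemma dotb_span_l a (X : seq (bits m)) v :
  (forall x, x \in X -> dotb x a = 0) -> v \in <<X>>%VS -> dotb v a = 0.
Proof.
move=> H Hv; rewrite dotbC. have H2 : forall x, x \in X -> dotb a x = 0 by move=> x /H; rewrite dotbC.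
exact: (dotb_span_r H2 Hv). Qed.

Definition mxof (X : seq (bits m)) : 'M['F_2]_(size X, m) := \matrix_(i < size X) X`_i.

Lemma free_rank X : free X -> (size X <= \rank (mxof X))%N.
Proof.
move=> fX.
have: kermx (mxof X) == 0.
  rewrite -submx0; apply/row_subP => i; rewrite submx0.
  set k := row i (kermx (mxof X)).
  have /sub_kermxP Hk : (k <= kermx (mxof X))%MS by apply: row_sub.
  have := fX; rewrite -[X]/(val (in_tuple X)) => /freeP Hf.
  apply/eqP/rowP => j; rewrite [RHS]mxE.
  apply: (Hf (fun j => k 0 j)).
  transitivity (k *m mxof X); last exact: Hk.
  rewrite mulmx_sum_row; apply: eq_bigr => l _; by rewrite rowK.
rewrite kermx_eq0 => /eqnP ->; done.
Qed.

Lemma sub_mxof (X : seq (bits m)) u : (u <= mxof X)%MS -> u \in <<X>>%VS.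
Proof.
case/submxP => k ->; rewrite mulmx_sum_row.
apply: memv_suml => i _; apply: memvZ; rewrite rowK; apply: memv_span.
by apply: mem_nth.
Qed.

End Lin.

Section Orth.
Variables (n m : nat) (f : bits n -> bits m).

Definition Kp (y : bits m) := forall x, dotb (f x) y = dotb (f 0) y.

Lemma KpE y : Kp y <-> forall x, dotb (f x - f 0) y = 0.
Proof.
split=> H x; first by rewrite dotbDl dotbNl H subrr.
by apply/eqP; rewrite -subr_eq0 -dotbNl -dotbDl H.
Qed.

Lemma yconstE y : yconstant f y <-> Kp y.
Proof. by split=> H x; [apply: H | move=> x'; rewrite !H]. Qed.

Definition Kb (y : bits m) : bool := [forall x, dotb (f x) y == dotb (f 0) y].

Lemma KbP y : reflect (Kp y) (Kb y).
Proof.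
apply: (iffP forallP) => H x; first exact/eqP/H.
by apply/eqP.
Qed.

Lemma Kp_span (X : seq (bits m)) v :
  (forall x, x \in X -> Kp x) -> v \in <<X>>%VS -> Kp v.
Proof.
move=> H Hv; apply/KpE => x; apply: (dotb_span_r _ Hv) => z /H /KpE; apply.
Qed.

Definition Dl := [seq f x - f 0 | x : bits n].
Definition bs := vbasis <<Dl>>%VS.
Definition Mb := mxof bs.

Lemma dim_img_E : dim_img f = size bs.
Proof. by rewrite size_tuple. Qed.

Lemma Kp_ker y : Kp y <-> (y <= kermx Mb^T)%MS.
Proof.
have E j : (y *m Mb^T) 0 j = dotb y bs`_j.
  rewrite /dotb !mxE; apply: eq_bigr => k _; rewrite !mxE; done.
split.
- move=> /KpE H; apply/sub_kermxP/rowP => j; rewrite E [RHS]mxE dotbC.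
  apply: (dotb_span_l (X := Dl)).
    by move=> z /mapP [x _ ->]; apply: H.
  apply: vbasis_mem; exact: (mem_nth _ (ltn_ord j)).
- move=> /sub_kermxP H; apply/KpE => x; rewrite dotbC.
  apply: (dotb_span_r (X := bs)).
    move=> z zin; have zi : (index z bs < size bs)%N by rewrite index_mem.
    have := E (Ordinal zi); rewrite /= nth_index // H mxE => <-; done.
  rewrite (span_basis (vbasisP _)); apply: memv_span.
  by apply/mapP; exists x => //; rewrite mem_enum.
Qed.

Lemma rank_Mb : \rank Mb = dim_img f.
Proof.
apply/eqP; rewrite eqn_leq {1}dim_img_E rank_leq_row /=.
rewrite dim_img_E; apply: free_rank; exact: basis_free (vbasisP _).
Qed.

Lemma dim_le_ker (U : {vspace bits m}) :
  (forall u, u \in U -> Kp u) -> (\dim U <= m - dim_img f)%N.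
Proof.
move=> H.
have fX : free (vbasis U) := basis_free (vbasisP U).
have h1 := free_rank fX; have h0 : size (vbasis U) = \dim U := size_tuple _; rewrite -h0.
have h2 : (mxof (vbasis U) <= kermx Mb^T)%MS.
  apply/row_subP => i; rewrite rowK; apply/Kp_ker/H/vbasis_mem.
  exact: (mem_nth _ (ltn_ord i)).
have := mxrankS h2; rewrite mxrank_ker mxrank_tr rank_Mb.
move=> h3; exact: leq_trans h1 h3.
Qed.

Lemma dim_le_img (U : {vspace bits m}) :
  (forall u, u \in U -> Kp u -> u = 0) -> (\dim U <= dim_img f)%N.
Proof.
move=> H.
have fX : free (vbasis U) := basis_free (vbasisP U).
have h1 := free_rank fX; have h0 : size (vbasis U) = \dim U := size_tuple _; rewrite -h0.
have h2 : (mxof (vbasis U) :&: kermx Mb^T)%MS = 0.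
  apply/eqP; rewrite -submx0; apply/row_subP => i.
  have := row_sub i (mxof (vbasis U) :&: kermx Mb^T)%MS.
  rewrite sub_capmx => /andP [hA hB].
  move/Kp_ker: hB; have := sub_mxof hA.
  rewrite (span_basis (vbasisP U)) => hu /(H _ hu) ->.
  by rewrite sub0mx.
have := mxrank_disjoint_sum h2.
have := rank_leq_col (mxof (vbasis U) + kermx Mb^T)%MS.
rewrite mxrank_ker mxrank_tr rank_Mb => h3 h4.
have h5 := rank_leq_col Mb; rewrite rank_Mb in h5.
move: h3; rewrite h4 => h3.
move: h1 h3 h5; move: (\rank (mxof (vbasis U))) => a; move: (size (vbasis U)) (dim_img f) => b c.
clear; lia.
Qed.

End Orth.

Lemma F2_cases (a : 'F_2) : a = 0 \/ a = 1.
Proof. case: a => [[|[|k]] H]; [left|right|]; try exact/val_inj. by []. Qed.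

Lemma dim_lt m (U V : {vspace bits m}) z :
  (U <= V)%VS -> z \in V -> z \notin U -> (\dim U < \dim V)%N.
Proof.
move=> sUV zV zU; rewrite ltn_neqAle (dimv_leqif_eq sUV).1 andbT (dimv_leqif_eq sUV).2.
by apply/eqP => E; rewrite E zV in zU.
Qed.

Lemma span_sub m (X Y : seq (bits m)) : {subset X <= Y} -> (<<X>> <= <<Y>>)%VS.
Proof. by move=> H; apply/span_subvP => z /H; apply: memv_span. Qed.

Section Alg.
Variables (n m : nat) (f : bits n -> bits m).

Definition Inv (s : state m) : Prop :=
  let: (C, B, q) := s in
  free C /\ (forall c, c \in C -> Kp f c) /\ uniq (0 :: B) /\
  (forall s, s \in B -> ~ Kp f s) /\
  (forall u, u \in <<B>>%VS -> u = 0 \/ u \in B) /\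
  exists b, size B = (2 ^ b - 1)%N /\ \dim <<B>> = b /\
            (q <= size C * 2 ^ b + (2 ^ b - 1))%N.

Lemma Inv_init : Inv (init_state m).
Proof.
rewrite /Inv /init_state /=; split; first exact: nil_free.
split=> //; split=> //; split=> //; split.
  by move=> u; rewrite span_nil memv0 => /eqP ->; left.
by exists 0%N; rewrite span_nil dimv0.
Qed.

Lemma step_dim (s s' : state m) :
  step f s s' -> (\dim <<s.1.1 ++ s.1.2>> < \dim <<s'.1.1 ++ s'.1.2>>)%N.
Proof.
case: s => [[C B] q]; case: s' => [[C' B'] q'] /= [_ [y [yU Hc]]].
case: Hc => [[Ky [-> [-> _]]] | [[nKy [B0 [-> [-> _]]]] | [nKy [Bn [ord [pord Hc]]]]]].
- apply: (dim_lt (z := y)) => //.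
    by apply: span_sub => z; rewrite !mem_cat mem_rcons in_cons => /orP [] ->; rewrite ?orbT.
  by apply: memv_span; rewrite mem_cat mem_rcons mem_head.
- subst B; apply: (dim_lt (z := y)) => //.
    by apply: span_sub => z; rewrite cats0 mem_cat => ->.
  by apply: memv_span; rewrite mem_cat mem_head orbT.
- case: Hc => [[k [kl [Hk [Kk [-> [-> _]]]]]] | [Hall [-> [-> _]]]].
  + set s := nth 0 ord k.
    have sB : s \in B by rewrite -(perm_mem pord); apply: mem_nth.
    apply: (dim_lt (z := s + y)).
    * by apply: span_sub => z; rewrite !mem_cat mem_rcons in_cons => /orP [] ->; rewrite ?orbT.
    * by apply: memv_span; rewrite mem_cat mem_rcons mem_head.
    * apply: contra yU => Hsy.
      have -> : y = (s + y) - s by rewrite addrC addKr.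
      apply: memvB => //; apply: memv_span; by rewrite mem_cat sB orbT.
  + apply: (dim_lt (z := y)) => //.
      by apply: span_sub => z; rewrite !mem_cat => /orP [] ->; rewrite ?orbT.
    by apply: memv_span; rewrite !mem_cat mem_head !orbT.
Qed.

End Alg.

Lemma A0 q c t : (1 <= t)%N -> (q <= c * t + (t - 1))%N -> (q.+1 <= c.+1 * t + (t - 1))%N.
Proof. nia. Qed.
Lemma A1 q c t k : (1 <= t)%N -> (q <= c * t + (t - 1))%N -> (k < t - 1)%N ->
  (q + 1 + k.+1 <= c.+1 * t + (t - 1))%N.
Proof. nia. Qed.
Lemma A2 q c t : (1 <= t)%N -> (q <= c * t + (t - 1))%N ->
  (q + 1 + (t - 1) <= c * (2 * t) + (2 * t - 1))%N.
Proof. nia. Qed.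
Lemma A3 q c : (q <= c * 1 + (1 - 1))%N -> (q.+1 <= c * 2 + (2 - 1))%N.
Proof. lia. Qed.
Lemma A4 t : (1 <= t)%N -> (t - 1 + (t - 1).+1 = 2 * t - 1)%N.
Proof. lia. Qed.

Section Alg2.
Variables (n m : nat) (f : bits n -> bits m).

Lemma step_inv (s s' : state m) : Inv f s -> step f s s' -> Inv f s'.
Proof.
case: s => [[C B] q]; case: s' => [[C' B'] q'] /=.
case=> fC [KC [uB [nKB [spB [b [sB [dB qb]]]]]]].
case=> _ [y [yU Hc]].
have inU z : z \in C ++ B -> z \in <<C ++ B>>%VS by apply: memv_span.
have yC : y \notin <<C>>%VS.
  apply: contra yU; apply/subvP; rewrite span_cat; exact: addvSl.
have BU z : z \in B -> z \in <<C ++ B>>%VS by move=> zB; apply: inU; rewrite mem_cat zB orbT.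
have WU : (<<B>> <= <<C ++ B>>)%VS by rewrite span_cat addvSr.
have y0 : y != 0 by apply: contra yU => /eqP ->; apply: mem0v.
have yB : y \notin B by apply: contra yU; apply: BU.
have t1 : (1 <= 2 ^ b)%N by rewrite expn_gt0.
have prc z : perm_eq (rcons C z) (z :: C) by rewrite -cats1 perm_catC.
move: uB; rewrite /= => /andP [B0n uB].
case: Hc => [[Ky [-> [-> ->]]] | [[nKy [B0 [-> [-> ->]]]] | [nKy [Bn [ord [pord Hc]]]]]].
- split; first by rewrite (perm_free (prc y)) free_cons yC fC.
  split.
    by move=> c; rewrite mem_rcons in_cons => /orP [/eqP -> | /KC //]; apply/yconstE.
  split; first by rewrite /= B0n uB.
  do 2 (split => //); exists b; split => //; split => //.
  rewrite size_rcons; exact: A0 t1 qb.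
- subst B; split => //; split => //.
  split; first by rewrite /= in_cons negb_or eq_sym y0.
  split; first by move=> s; rewrite mem_seq1 => /eqP ->; move/yconstE.
  split.
    move=> u; rewrite span_seq1 => /vlineP [a ->].
    by case: (F2_cases a) => ->; [left; rewrite scale0r | right; rewrite scale1r mem_seq1].
  exists 1%N; split => //; split; first by rewrite span_seq1 dim_vline y0.
  move: qb; rewrite -dB span_nil dimv0 expn0 expn1; exact: A3.
- have sizeo : size ord = size B by apply: perm_size.
  case: Hc => [[k [kl [Hk [Kk [-> [-> ->]]]]]] | [Hall [-> [-> ->]]]].
  + set s := nth 0 ord k.
    have sB' : s \in B by rewrite -(perm_mem pord); apply: mem_nth.
    have syC : s + y \notin <<C>>%VS.
      apply: contra yU => Hsy.
      have -> : y = (s + y) - s by rewrite addrC addKr.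
      apply: memvB; last exact: BU.
      by move: Hsy; apply/subvP; rewrite span_cat; exact: addvSl.
    split; first by rewrite (perm_free (prc _)) free_cons syC fC.
    split.
      by move=> c; rewrite mem_rcons in_cons => /orP [/eqP -> | /KC //]; apply/yconstE.
    split; first by rewrite /= B0n uB.
    do 2 (split => //); exists b; split => //; split => //.
    rewrite size_rcons; move: kl; rewrite sizeo sB; exact: A1 t1 qb.
  + have ordB z : (z \in ord) = (z \in B) by apply: perm_mem.
    have sub : (<<B ++ y :: [seq (s0 + y)%R | s0 <- ord]>> <= <<B>> + <[y]>)%VS.
      apply/span_subvP => z; rewrite mem_cat in_cons => /orP [zB | /orP [/eqP -> | /mapP [s0 s0o ->]]].
      * by apply: (subvP (addvSl _ _)); apply: memv_span.
      * by apply: (subvP (addvSr _ _)); apply: memv_line.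
      * apply: memv_add; last exact: memv_line.
        by apply: memv_span; rewrite -ordB.
    have notB z : z \in B -> z + y \notin B.
      move=> zB; apply: contra yU => zyB.
      have -> : y = (z + y) - z by rewrite addrC addKr.
      by apply: memvB; apply: BU.
    split => //; split => //.
    split.
      rewrite /= mem_cat negb_or B0n /= in_cons negb_or eq_sym y0 /=.
      rewrite cat_uniq uB /=.
      apply/and4P; split.
      * apply/mapP => -[s0 s0o E].
        have Ey : y = - s0 by apply/eqP; rewrite -addr_eq0 addrC -E.
        by move/negP: yU; apply; rewrite Ey memvN; apply: BU; rewrite -ordB.
      * rewrite (negbTE yB) /=; apply/hasPn => z /mapP [s0 s0o ->].
        by apply: notB; rewrite -ordB.
      * apply/negP => /mapP [s0 s0o /eqP]; rewrite eq_sym -subr_eq0 addrK => /eqP E.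
        by move: B0n; rewrite -E -ordB s0o.
      * rewrite map_inj_uniq; first by rewrite (perm_uniq pord).
        exact: addIr.
    split.
      move=> z; rewrite mem_cat in_cons => /orP [/nKB // | /orP [/eqP -> | /mapP [s0 s0o ->]]].
        by move/yconstE.
      have := s0o; rewrite -index_mem => io.
      have := Hall _ io; rewrite nth_index // => H /yconstE; exact: H.
    split.
      move=> u /(subvP sub) /memv_addP [v vW [w /vlineP [a ->] ->]].
      case: (spB _ vW) => [-> | vB]; case: (F2_cases a) => ->.
      * by left; rewrite scale0r addr0.
      * by right; rewrite scale1r add0r mem_cat in_cons eqxx orbT.
      * by right; rewrite scale0r addr0 mem_cat vB.
      * right; rewrite scale1r mem_cat in_cons; apply/orP; right; apply/orP; right.
        by apply/mapP; exists v; rewrite ?ordB.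
    exists b.+1; split.
      rewrite size_cat /= size_map sizeo sB (expnS 2 b); exact: A4 t1.
    split.
      apply/eqP; rewrite eqn_leq; apply/andP; split.
        apply: (leq_trans (dimvS sub)).
        have h := (dimv_add_leqif <<B>> <[y]>).1.
        by rewrite dim_vline y0 dB addn1 in h.
      rewrite -dB; apply: (dim_lt (z := y)).
      * by apply: span_sub => z; rewrite mem_cat => ->.
      * by apply: memv_span; rewrite mem_cat mem_head orbT.
      * by apply: contra yU; apply/subvP.
    rewrite sizeo sB (expnS 2 b); exact: A2 t1 qb.
Qed.

End Alg2.

Lemma A5 a b c k : (b < c)%N -> (c <= a)%N -> (a - b < k.+1)%N -> (a - c < k)%N.
Proof. lia. Qed.
Lemma A6 m r c b : (c <= m - r)%N -> (b <= r)%N -> (m <= c + b)%N -> (r <= m)%N ->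
  c = (m - r)%N /\ b = r.
Proof. lia. Qed.
Lemma A7 q c t : (1 <= t)%N -> (q <= c * t + (t - 1))%N -> (q <= t * (c + 1) - 1)%N.
Proof. nia. Qed.

Section Alg3.
Variables (n m : nat) (f : bits n -> bits m).

Lemma reach_inv s : reachable f s -> Inv f s.
Proof.
elim=> [|s0 s1 _ IH Hst]; first exact: Inv_init.
exact: step_inv IH Hst.
Qed.

Definition dsp (s : state m) := \dim <<s.1.1 ++ s.1.2>>.

Lemma acc_all k (s : state m) : (\dim (fullv : {vspace bits m}) - dsp s < k)%N ->
  Acc (fun s' s => step f s s') s.
Proof.
elim: k s => [//|k IH] s Hk; constructor => s' Hst.
apply: IH.
have h1 := step_dim Hst.
have h2 : (dsp s' <= \dim (fullv : {vspace bits m}))%N by apply: dimvS; apply: subvf.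
exact: A5 h1 h2 Hk.
Qed.

Lemma stuck C B q : ~ (exists s', step f (C, B, q) s') -> <<C ++ B>>%VS = fullv.
Proof.
move=> H; case: (eqVneq <<C ++ B>>%VS fullv) => // Hne; exfalso; apply: H.
have : ~~ (fullv <= <<C ++ B>>)%VS.
  apply: contra Hne => Hs; rewrite eqEsubv Hs subvf; done.
case/subvPn => y _ yU.
case: (boolP (Kb f y)) => [/KbP Ky | nKy].
  exists (rcons C y, B, q.+1); split; first exact: Hne.
  by exists y; split => //; left; split => //; apply/yconstE.
have nKy' : ~ yconstant f y by move/yconstE/KbP; apply/negP.
case: (eqVneq B [::]) => [B0 | Bn].
  exists (C, [:: y], q.+1); split; first exact: Hne.
  by exists y; split => //; right; left.
pose P k := (k < size B)%N && Kb f (nth 0 B k + y).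
case: (boolP [exists k : 'I_(size B), Kb f (nth 0 B k + y)]) => [hex | hnex].
- have exP : exists k, P k.
    by case/existsP: hex => k hk; exists k; rewrite /P ltn_ord hk.
  case: (ex_minnP exP) => k /andP [kl Kk] kmin.
  exists (rcons C (nth 0 B k + y), B, (q + 1 + k.+1)%N); split; first exact: Hne.
  exists y; split => //; right; right; split => //; split => //.
  exists B; split; first exact: perm_refl.
  left; exists k; split => //; split.
    move=> i ik /yconstE /KbP Ki.
    have : (k <= i)%N by apply: kmin; rewrite /P Ki andbT; apply: ltn_trans ik kl.
    by rewrite leqNgt ik.
  by split => //; apply/yconstE/KbP.
- exists (C, B ++ y :: [seq s + y | s <- B], (q + 1 + size B)%N); split; first exact: Hne.
  exists y; split => //; right; right; split => //; split => //.
  exists B; split; first exact: perm_refl.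
  right; split => //.
  move=> i il /yconstE /KbP Ki.
  by move/existsPn: hnex => /(_ (Ordinal il)); rewrite Ki.
Qed.

End Alg3.

Theorem mainTheorem10 (n m : nat) (f : 'rV['F_2]_n -> 'rV['F_2]_m) :
  fully_balanced f ->
  (* termination: no infinite run from the initial state *)
  Acc (fun s' s => step f s s') (init_state m) /\
  (* every reachable state where the loop stops satisfies the claims *)
  (forall C B q, reachable f (C, B, q) -> ~ (exists s', step f (C, B, q) s') ->
     final (C, B, q) /\
     #|[set y in C]| = (m - dim_img f)%N /\
     free C /\ (forall y, y \in <<C>>%VS <-> yconstant f y) /\
     #|[set y in B]| = (2 ^ dim_img f - 1)%N /\
     (q <= 2 ^ dim_img f * (m - dim_img f + 1) - 1)%N).
Proof.
move=> _; split.
  exact: (@acc_all n m f _ (init_state m) (ltnSn _)).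
move=> C B q Hr Hst.
have Hf := stuck Hst.
case: (reach_inv Hr) => fC [KC [uB [nKB [spB [b [sB [dB qb]]]]]]].
have hS : forall u, u \in <<C>>%VS -> Kp f u by move=> u; apply: Kp_span.
have hW : forall u, u \in <<B>>%VS -> Kp f u -> u = 0.
  by move=> u /spB [// | /nKB].
have le1 := dim_le_ker hS.
have le2 := dim_le_img hW.
have dC : \dim <<C>> = size C by apply/eqP.
have dF : \dim (fullv : {vspace bits m}) = m by rewrite dimvf dim_matrix; exact: mul1n.
have le3 : (m <= size C + b)%N.
  by have := (dimv_add_leqif <<C>> <<B>>).1; rewrite -span_cat Hf dF dC dB.
have le4 : (dim_img f <= m)%N.
  by have := dimvS (subvf <<Dl f>>%VS); rewrite dF.
rewrite dC in le1; rewrite dB in le2.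
have [eC eb] := A6 le1 le2 le3 le4.
move: uB; rewrite /= => /andP [_ uB].
split; first exact: Hf.
split; first by rewrite cardsE; rewrite -eC; apply/card_uniqP; apply: free_uniq.
split => //.
split.
  move=> y; split; first by move/hS/yconstE.
  move/yconstE => Ky.
  have : y \in <<C ++ B>>%VS by rewrite Hf memvf.
  rewrite span_cat => /memv_addP [s sS [w wW Ey]].
  have Kw : Kp f w.
    apply/KpE => x; have -> : w = y - s by rewrite Ey addrC addKr.
    rewrite dotbDr dotbNr.
    by move/KpE: Ky => ->; move/hS/KpE: sS => ->; rewrite subrr.
  by rewrite Ey (hW _ wW Kw) addr0.
split; first by rewrite cardsE -eb -sB; apply/card_uniqP.
rewrite -eb; rewrite eC in qb; rewrite -eb in eC.
rewrite -eb in qb; apply: A7 qb; by rewrite expn_gt0.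
Qed.
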